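(* Let $n\ge 1$, let $C=(c_{i,j})$ be an $n\times n$ Bott matrix over $\mathbb{Z}_2$, and let $Y_n=Y(C)$ be the associated real Bott tower. Let $W$ be the right-angled Coxeter group with generators $s_1,\dots,s_{2n}$ and relations $s_j^2=1$ for $1\le j\le 2n$ and $(s_is_j)^2=1$ for all $1\le i<j\le 2n$ with $j\neq i+n$. For $n+1\le j\le 2n$ put $$\alpha_j:=s_j\,s_{j-n}\,s_{j-n+1}^{c_{j-n,j-n+1}}\,s_{j-n+2}^{c_{j-n,j-n+2}}\cdots s_n^{c_{j-n,n}}\in W$$ (so $\alpha_{2n}=s_{2n}s_n$). Then $\pi_1(Y_n)$, viewed as the kernel of the homomorphism $W\to\mathbb{Z}_2^n$ sending $s_i\mapsto\lambda(F_i)$, is generated by $\{\alpha_j: n+1\le j\le 2n\}$, and a complete set of defining relations for $\pi_1(Y_n)$ on these generators is $\{x_{p,q}: n+1\le p<q\le 2n\}$, where $$x_{p,q}=\begin{cases}\alpha_p\alpha_q\alpha_p^{-1}\alpha_q^{-1} & \text{if } c_{p-n,q-n}=0,\\ \alpha_p\alpha_q^{-1}\alpha_p^{-1}\alpha_q^{-1} & \text{if } c_{p-n,q-n}=1.\end{cases}$$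
   Context: A Bott matrix is an $n\times n$ matrix $C=(c_{i,j})$ with entries in $\mathbb{Z}_2=\mathbb{Z}/2\mathbb{Z}$ such that $c_{i,i}=1$ and $c_{i,j}=0$ for $i>j$. Let $I^n$ be the $n$-cube, with its $2n$ facets labelled $F_1,\dots,F_{2n}$ so that $F_j$ and $F_{n+j}$ are opposite (disjoint) facets for $1\le j\le n$. Let $e_1,\dots,e_n$ be the standard basis of $\mathbb{Z}_2^n$ and define $\lambda(F_j)=e_j$ and $\lambda(F_{n+j})=e_j+\sum_{k=j+1}^n c_{j,k}e_k$ for $1\le j\le n$. The real Bott tower $Y_n=Y(C)$ is the small cover $(\mathbb{Z}_2^n\times I^n)/\sim$, where $(t,p)\sim(t',p')$ iff $p=p'$ and $t-t'$ lies in the subgroup of $\mathbb{Z}_2^n$ spanned by $\lambda(F)$ for the facets $F$ containing $p$. Equivalently, $Y_n$ is the real toric variety of the complete smooth fan in $\mathbb{R}^n$ whose cones are spanned by subsets of $\{v_1,\dots,v_{2n}\}$ not containing both $v_i$ and $v_{n+i}$, where $v_j=e_j$ and $v_{n+j}=-e_j+\sum_{k>j}c_{j,k}e_k$. It is a closed smooth $n$-manifold obtained as an iterated $\mathbb{R}P^1$-bundle. *)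

(* Defs.v *)
From mathcomp Require Import all_boot all_algebra.
Set Implicit Arguments. Unset Strict Implicit. Unset Printing Implicit Defensive.
Import GRing.Theory.
Local Open Scope ring_scope.

(** Words in the free group on generators of type I: a letter (x, true) is
    the generator x, (x, false) its inverse. *)
Definition word (I : Type) := seq (I * bool).
Definition linv (I : Type) (l : I * bool) : I * bool := (l.1, ~~ l.2).
Definition winv (I : Type) (w : word I) : word I := rev (map (@linv I) w).

Inductive pres_eq (I : Type) (R : word I -> Prop) : word I -> word I -> Prop :=
| pres_refl w : pres_eq R w w
| pres_sym u v : pres_eq R u v -> pres_eq R v u
| pres_trans u v w : pres_eq R u v -> pres_eq R v w -> pres_eq R u w
| pres_cancel u v x b :
    pres_eq R (u ++ (x, b) :: (x, ~~ b) :: v) (u ++ v)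
| pres_rel u v r : R r -> pres_eq R (u ++ r ++ v) (u ++ v).

Definition subst_word (I J : Type) (f : I -> word J) (w : word I) : word J :=
  flatten (map (fun l => if l.2 then f l.1 else winv (f l.1)) w).

Definition is_bott_matrix (n : nat) (C : 'M['F_2]_n) : Prop :=
  (forall i, C i i = 1) /\ (forall i j : 'I_n, (j < i)%N -> C i j = 0).

(** Facets of I^n: index i : 'I_(n+n) (0-based); lshift n j is F_{j+1},
    rshift n j is F_{n+j+1}; they are opposite. *)
Definition evec (n : nat) (j : 'I_n) : 'rV['F_2]_n := \row_k (k == j)%:R.

Definition lam (n : nat) (C : 'M['F_2]_n) (i : 'I_(n + n)) : 'rV['F_2]_n :=
  match split i with
  | inl j => evec j
  | inr j => evec j + \sum_(k < n | (j < k)%N) C j k *: evec k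
  end.

Definition phi (n : nat) (C : 'M['F_2]_n) (w : word 'I_(n + n)) : 'rV['F_2]_n :=
  \sum_(l <- w) (if l.2 then lam C l.1 else - lam C l.1).

Definition rac_rel (n : nat) (r : word 'I_(n + n)) : Prop :=
  (exists i : 'I_(n + n), r = [:: (i, true); (i, true)]) \/
  (exists i j : 'I_(n + n), (i < j)%N /\ (nat_of_ord j != i + n)%N /\
     r = [:: (i, true); (j, true); (i, true); (j, true)]).

(** alpha_{n+j+1} = s_{n+j+1} s_{j+1} s_{j+2}^{c_{j,j+1}} ... s_n^{c_{j,n}}
    (0-based j : 'I_n). *)
Definition alpha (n : nat) (C : 'M['F_2]_n) (j : 'I_n) : word 'I_(n + n) :=
  (rshift n j, true) :: (lshift n j, true) ::
  map (fun k => (lshift n k, true))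
      (filter (fun k : 'I_n => (j < k)%N && (C j k == 1)) (enum 'I_n)).

(** The relators x_{p,q} on generators a_{n+1..2n} (0-based p q : 'I_n). *)
Definition xpq (n : nat) (C : 'M['F_2]_n) (p q : 'I_n) : word 'I_n :=
  if C p q == 0 then [:: (p, true); (q, true); (p, false); (q, false)]
  else [:: (p, true); (q, false); (p, false); (q, false)].

Definition bott_rel (n : nat) (C : 'M['F_2]_n) (r : word 'I_n) : Prop :=
  exists p q : 'I_n, (p < q)%N /\ r = xpq C p q.

(* Main.v *)
Require Import Defs.
From mathcomp Require Import all_boot all_algebra.
Import GRing.Theory.
Set Implicit Arguments. Unset Strict Implicit. Unset Printing Implicit Defensive.
Local Open Scope ring_scope.

Lemma F2cases (x : 'F_2) : x = 0 \/ x = 1.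
Proof. case: x => [[|[|m]]] H; [left|right|by []]; by apply: val_inj. Qed.
Lemma F2dbl (x : 'F_2) : x + x = 0.
Proof. by case: (F2cases x) => ->; apply/val_inj. Qed.
Lemma F2opp (x : 'F_2) : - x = x.
Proof. by case: (F2cases x) => ->; apply/val_inj. Qed.
Lemma F2ne (x : 'F_2) : (x + 1 == 0) = ~~ (x == 0).
Proof. by case: (F2cases x) => ->. Qed.
Lemma F2ne' (x : 'F_2) : (x - 1 == 0) = ~~ (x == 0).
Proof. by case: (F2cases x) => ->. Qed.

Lemma pe_catl I (R : word I -> Prop) u v w :
  pres_eq R u v -> pres_eq R (w ++ u) (w ++ v).
Proof.
elim=> {u v} [u|u v _ IH|u v x _ IH1 _ IH2|u v x b|u v r Hr].
- exact: pres_refl.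
- exact: pres_sym.
- exact: pres_trans IH2.
- by rewrite !catA; apply: pres_cancel.
- by rewrite !catA -(catA _ r); apply: pres_rel.
Qed.

Lemma pe_catr I (R : word I -> Prop) u v w :
  pres_eq R u v -> pres_eq R (u ++ w) (v ++ w).
Proof.
elim=> {u v} [u|u v _ IH|u v x _ IH1 _ IH2|u v x b|u v r Hr].
- exact: pres_refl.
- exact: pres_sym.
- exact: pres_trans IH2.
- by rewrite -!catA /=; apply: pres_cancel.
- by rewrite -!catA; apply: pres_rel.
Qed.

Lemma pe_cat I (R : word I -> Prop) u u' v v' :
  pres_eq R u u' -> pres_eq R v v' -> pres_eq R (u ++ v) (u' ++ v').
Proof.
move=> H1 H2; apply: (pres_trans (pe_catr v H1)); exact: pe_catl.
Qed.

Lemma winv_cat I (u v : word I) : winv (u ++ v) = winv v ++ winv u.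
Proof. by rewrite /winv map_cat rev_cat. Qed.

Lemma winv_cons I (l : I * bool) (u : word I) : winv (l :: u) = winv u ++ [:: linv l].
Proof. by rewrite /winv /= rev_cons cats1. Qed.

Lemma winvK I (u : word I) : winv (winv u) = u.
Proof.
rewrite /winv map_rev revK -map_comp.
by elim: u => [|[x b] u IH] //=; rewrite IH /linv /= negbK.
Qed.

Lemma pe_winvr I (R : word I -> Prop) w : pres_eq R (w ++ winv w) [::].
Proof.
elim: w => [|[x b] w IH] /=; first exact: pres_refl.
rewrite winv_cons catA.
apply: pres_trans (_ : pres_eq R ([:: (x, b)] ++ [::] ++ [:: (x, ~~ b)]) _).
  by rewrite -cat_cons; apply: pe_catr; apply: (pe_catl [:: (x,b)]).
exact: (pres_cancel R [::] [::] x b).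
Qed.

Lemma pe_winvl I (R : word I -> Prop) w : pres_eq R (winv w ++ w) [::].
Proof. by have := pe_winvr R (winv w); rewrite winvK. Qed.

Lemma pe_rot I (R : word I -> Prop) x y :
  pres_eq R (x ++ y) [::] -> pres_eq R (y ++ x) [::].
Proof.
move=> H.
apply: pres_trans (_ : pres_eq R ((y ++ x) ++ (y ++ winv y)) _).
  by rewrite -{1}(cats0 (y ++ x)); apply: pe_catl; apply: pres_sym; apply: pe_winvr.
apply: pres_trans (pe_winvr R y).
have -> : (y ++ x) ++ y ++ winv y = y ++ ((x ++ y) ++ winv y) by rewrite !catA.
apply: pe_catl; exact: (pe_catr (winv y) H).
Qed.

Lemma pe_inv I (R : word I -> Prop) r :
  pres_eq R r [::] -> pres_eq R (winv r) [::].
Proof.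
move=> H; apply: pres_trans (pe_winvl R r).
rewrite -{1}(cats0 (winv r)); apply: pe_catl; exact: pres_sym.
Qed.

Lemma pe_rel I (R : word I -> Prop) r : R r -> pres_eq R r [::].
Proof. by move=> H; have := pres_rel [::] [::] H; rewrite /= cats0. Qed.

Definition dl n (C : 'M['F_2]_n) (l : 'I_(n+n) * bool) : 'rV['F_2]_n :=
  if l.2 then lam C l.1 else - lam C l.1.

Lemma phi_nil n (C : 'M['F_2]_n) : phi C [::] = 0.
Proof. by rewrite /phi big_nil. Qed.
Lemma phi_cons n (C : 'M['F_2]_n) l w : phi C (l :: w) = dl C l + phi C w.
Proof. by rewrite /phi big_cons. Qed.
Lemma phi_cat n (C : 'M['F_2]_n) u v : phi C (u ++ v) = phi C u + phi C v.
Proof. by rewrite /phi big_cat. Qed.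

Lemma oppv n (v : 'rV['F_2]_n) : - v = v.
Proof. by apply/matrixP => a b; rewrite mxE F2opp. Qed.
Lemma dblv n (v : 'rV['F_2]_n) : v + v = 0.
Proof. by apply/matrixP => a b; rewrite !mxE F2dbl. Qed.

Lemma dlE n (C : 'M['F_2]_n) l : dl C l = lam C l.1.
Proof. by rewrite /dl; case: ifP => // _; rewrite oppv. Qed.

Lemma split_l n (k : 'I_n) : split (lshift n k) = inl k.
Proof. exact: (unsplitK (inl k)). Qed.
Lemma split_r n (k : 'I_n) : split (rshift n k) = inr k.
Proof. exact: (unsplitK (inr k)). Qed.

Lemma lam_l n (C : 'M['F_2]_n) k : lam C (lshift n k) = evec k.
Proof. by rewrite /lam split_l. Qed.

Lemma evecE n (j k : 'I_n) : evec j 0 k = (k == j)%:R.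
Proof. by rewrite mxE. Qed.

Lemma lam_rE n (C : 'M['F_2]_n) j k :
  lam C (rshift n j) 0 k = (k == j)%:R + (if (j < k)%N then C j k else 0).
Proof.
rewrite /lam split_r !mxE summxE; congr (_ + _).
rewrite big_mkcond /= (bigD1 k) //= big1 ?addr0.
- by rewrite !mxE eqxx mulr1; case: ifP.
- move=> i /negbTE ik; rewrite !mxE eq_sym ik mulr0; by case: ifP.
Qed.

Lemma lam_rjj n (C : 'M['F_2]_n) j : lam C (rshift n j) 0 j = 1.
Proof. by rewrite lam_rE eqxx ltnn addr0. Qed.
Lemma lam_rlt n (C : 'M['F_2]_n) (a b : 'I_n) : (a < b)%N -> lam C (rshift n b) 0 a = 0.
Proof.
move=> ab; rewrite lam_rE; have -> : (a == b) = false by apply/negbTE; rewrite neq_ltn ab.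
by rewrite ltnNge (ltnW ab) /= addr0.
Qed.
Lemma lam_rgt n (C : 'M['F_2]_n) (a b : 'I_n) : (a < b)%N -> lam C (rshift n a) 0 b = C a b.
Proof.
move=> ab; rewrite lam_rE ab; have -> : (b == a) = false by apply/negbTE; rewrite neq_ltn ab orbT.
by rewrite add0r.
Qed.

Definition tau1 n (c : 'rV['F_2]_n) (l : 'I_(n+n) * bool) : word 'I_n :=
  match split l.1 with inl _ => [::] | inr j => [:: (j, c 0 j == 0)] end.

Fixpoint tau n (C : 'M['F_2]_n) c (w : word 'I_(n+n)) : word 'I_n :=
  match w with [::] => [::] | l :: w' => tau1 c l ++ tau C (c + dl C l) w' end.

Lemma tau1_l n (c : 'rV['F_2]_n) k b : tau1 c (lshift n k, b) = [::].
Proof. by rewrite /tau1 split_l. Qed.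
Lemma tau1_r n (c : 'rV['F_2]_n) k b : tau1 c (rshift n k, b) = [:: (k, c 0 k == 0)].
Proof. by rewrite /tau1 split_r. Qed.

Lemma tau_cat n (C : 'M['F_2]_n) c u v :
  tau C c (u ++ v) = tau C c u ++ tau C (c + phi C u) v.
Proof.
elim: u c => [|l u IH] c /=; first by rewrite phi_nil addr0.
by rewrite IH phi_cons addrA catA.
Qed.

Lemma dl_neg n (C : 'M['F_2]_n) x b : dl C (x, ~~ b) = - dl C (x, b).
Proof. by rewrite /dl; case: b => //=; rewrite opprK. Qed.

Lemma phi_winv n (C : 'M['F_2]_n) w : phi C (winv w) = - phi C w.
Proof.
elim: w => [|[x b] w IH]; first by rewrite /winv /= phi_nil oppr0.
rewrite winv_cons phi_cat IH phi_cons phi_cons phi_nil addr0 /linv /= dl_neg.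
by rewrite opprD addrC.
Qed.

Definition Lw n (s : seq 'I_n) : word 'I_(n + n) := map (fun k => (lshift n k, true)) s.
Definition tw n (c : 'rV['F_2]_n) : word 'I_(n + n) :=
  Lw (filter (fun k => c 0 k == 1) (enum 'I_n)).

Lemma tau_lsh n (C : 'M['F_2]_n) c b (s : seq 'I_n) :
  tau C c (map (fun k => (lshift n k, b)) s) = [::].
Proof. by elim: s c => [|k s IH] c //=; rewrite IH tau1_l. Qed.

Lemma phi_Lw n (C : 'M['F_2]_n) s : phi C (Lw s) = \sum_(k <- s) evec k.
Proof.
elim: s => [|k s IH]; first by rewrite phi_nil big_nil.
by rewrite /= phi_cons IH big_cons /dl /= lam_l.
Qed.

Lemma sum_filter n (d : 'rV['F_2]_n) :
  \sum_(k <- filter (fun k => d 0 k == 1) (enum 'I_n)) evec k = d.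
Proof.
rewrite big_filter big_enum_cond /=.
apply/matrixP => a b; rewrite (ord1 a) summxE big_mkcond /=.
rewrite (bigD1 b) //= big1 ?addr0.
  by rewrite !mxE eqxx; case: (F2cases (d 0 b)) => ->.
by move=> i /negbTE ib; case: ifP => // _; rewrite !mxE eq_sym ib.
Qed.

Lemma rac_sq n (i : 'I_(n+n)) : rac_rel [:: (i,true);(i,true)].
Proof. by left; exists i. Qed.

Lemma rac_comm n (i j : 'I_(n+n)) : (i < j)%N -> (nat_of_ord j != i + n)%N ->
  pres_eq (@rac_rel n) [:: (j,true);(i,true)] [:: (i,true);(j,true)].
Proof.
move=> ij jn.
have Hr : rac_rel [:: (i,true);(j,true);(i,true);(j,true)] by right; exists i, j.
apply: pres_trans (_ : pres_eq _ ([:: (i,true); (i,true)] ++ [:: (j,true);(i,true)]) _).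
  by apply: pres_sym; apply: (pres_rel [::] [:: (j,true);(i,true)] (rac_sq i)).
apply: pres_trans (_ : pres_eq _ ([:: (i,true); (i,true); (j,true);(i,true)] ++ [:: (j,true);(j,true)] ++ [::]) _).
  by apply: pres_sym; have := pres_rel [:: (i,true); (i,true); (j,true);(i,true)] [::] (rac_sq j); rewrite cats0.
exact: (pres_rel [:: (i,true)] [:: (j,true)] Hr).
Qed.

Lemma comm_ll n (a b : 'I_n) :
  pres_eq (@rac_rel n) [:: (lshift n a,true);(lshift n b,true)] [:: (lshift n b,true);(lshift n a,true)].
Proof.
case: (ltngtP a b) => [ab|ba|/val_inj ->]; last exact: pres_refl.
- apply: pres_sym; apply: rac_comm => //=.
  by rewrite neq_ltn (leq_trans (ltn_ord b)) ?leq_addl.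
- apply: rac_comm => //=.
  by rewrite neq_ltn (leq_trans (ltn_ord a)) ?leq_addl.
Qed.

Lemma comm_lr n (k j : 'I_n) : k != j ->
  pres_eq (@rac_rel n) [:: (rshift n j,true);(lshift n k,true)] [:: (lshift n k,true);(rshift n j,true)].
Proof.
move=> kj; apply: rac_comm => /=.
  by apply: (leq_trans (ltn_ord k)); rewrite leq_addr.
by rewrite addnC eqn_add2r eq_sym.
Qed.

Lemma pe_letter n (x : 'I_(n+n)) b : pres_eq (@rac_rel n) [:: (x,b)] [:: (x,true)].
Proof.
case: b; first exact: pres_refl.
apply: pres_trans (_ : pres_eq _ ([:: (x,false)] ++ [:: (x,true);(x,true)] ++ [::]) _).
  by apply: pres_sym; have := pres_rel [:: (x,false)] [::] (rac_sq x); rewrite cats0.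
exact: (pres_cancel _ [::] [:: (x,true)] x false).
Qed.

Definition norm I (w : word I) : word I := map (fun l => (l.1, true)) w.

Lemma pe_norm n (w : word 'I_(n+n)) : pres_eq (@rac_rel n) w (norm w).
Proof.
elim: w => [|[x b] w IH] /=; first exact: pres_refl.
exact: (pe_cat (pe_letter x b) IH).
Qed.

Lemma norm_winv I (w : word I) : norm (winv w) = rev (norm w).
Proof. by rewrite /norm /winv map_rev -map_comp. Qed.

Lemma comm_list (I : eqType) (R : word I -> Prop) x (s : word I) :
  (forall y, y \in s -> pres_eq R [:: y; x] [:: x; y]) ->
  pres_eq R (s ++ [:: x]) (x :: s).
Proof.
elim: s => [|y s IH] H /=; first exact: pres_refl.
apply: pres_trans (_ : pres_eq R ([:: y] ++ x :: s) _).
  apply: (pe_catl [:: y]); apply: IH => z zs; apply: H; by rewrite inE zs orbT.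
exact: (pe_catr s (H y (mem_head _ _))).
Qed.

Lemma Lw_cat n (s1 s2 : seq 'I_n) : Lw (s1 ++ s2) = Lw s1 ++ Lw s2.
Proof. by rewrite /Lw map_cat. Qed.

Lemma Lw_perm n (s1 s2 : seq 'I_n) : perm_eq s1 s2 -> pres_eq (@rac_rel n) (Lw s1) (Lw s2).
Proof.
elim: s1 s2 => [|x s1 IH] s2 H.
  by move: (perm_size H); case: s2 H => // _ _; exact: pres_refl.
have xs2 : x \in s2 by rewrite -(perm_mem H) mem_head.
case/splitPr: xs2 H => p1 p2 H.
have H' : perm_eq s1 (p1 ++ p2).
  by rewrite -(perm_cons x); apply: (perm_trans H); rewrite perm_sym -cat1s perm_catCA.
apply: pres_trans (_ : pres_eq _ (Lw [:: x] ++ Lw (p1 ++ p2)) _).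
  by rewrite -cat1s Lw_cat; exact: (pe_catl _ (IH _ H')).
rewrite !Lw_cat /=.
have -> : Lw p1 ++ (lshift n x,true) :: Lw p2 = (Lw p1 ++ [:: (lshift n x,true)]) ++ Lw p2 by rewrite -catA.
apply: pres_sym; rewrite -cat_cons; apply: pe_catr.

apply: comm_list => y /mapP [k _ ->]; exact: comm_ll.
Qed.

Definition fl n (d : 'rV['F_2]_n) := filter (fun k => d 0 k == 1) (enum 'I_n).

Lemma fl_uniq n (d : 'rV['F_2]_n) : uniq (fl d).
Proof. by rewrite filter_uniq ?enum_uniq. Qed.
Lemma mem_fl n (d : 'rV['F_2]_n) k : (k \in fl d) = (d 0 k == 1).
Proof. by rewrite mem_filter mem_enum andbT. Qed.

Lemma tw0 n : tw (0 : 'rV['F_2]_n) = [::].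
Proof.
rewrite /tw; have -> : filter (fun k => (0 : 'rV['F_2]_n) 0 k == 1) (enum 'I_n) = [::] => //.
by rewrite (@eq_filter _ _ pred0) ?filter_pred0 // => k; rewrite mxE.
Qed.

Lemma addevecE n (c : 'rV['F_2]_n) j k : (c + evec j) 0 k = c 0 k + (k == j)%:R.
Proof. by rewrite !mxE. Qed.

Lemma T1 n (c : 'rV['F_2]_n) j :
  pres_eq (@rac_rel n) (tw c ++ [:: (lshift n j, true)]) (tw (c + evec j)).
Proof.
rewrite /tw -/(fl c) -/(fl _).
have -> : [:: (lshift n j, true)] = Lw [:: j] by [].
rewrite -Lw_cat.
case: (F2cases (c 0 j)) => cj.
- apply: Lw_perm; apply: uniq_perm.
  + by rewrite cats1 rcons_uniq fl_uniq mem_fl cj andbT.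
  + exact: fl_uniq.
  + move=> k; rewrite mem_cat !mem_fl addevecE inE.
    case: (eqVneq k j) => [->|kj]; first by rewrite cj.
    by rewrite addr0 orbF.
- apply: pres_trans (_ : pres_eq _ (Lw (j :: j :: fl (c + evec j))) _).
    apply: Lw_perm; rewrite cats1 perm_rcons /= perm_cons.
    apply: uniq_perm; first exact: fl_uniq.
      by rewrite /= fl_uniq mem_fl addevecE eqxx cj andbT.
    move=> k; rewrite inE !mem_fl addevecE.
    case: (eqVneq k j) => [->|kj]; first by rewrite cj.
    by rewrite addr0.
  exact: (pres_rel [::] _ (rac_sq (lshift n j))).
Qed.

Lemma T2 n (c : 'rV['F_2]_n) s :
  pres_eq (@rac_rel n) (tw c ++ Lw s) (tw (c + \sum_(k <- s) evec k)).
Proof.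
elim: s c => [|k s IH] c; first by rewrite big_nil addr0 cats0; exact: pres_refl.
rewrite big_cons addrA -cat1s Lw_cat catA.
apply: pres_trans (IH (c + evec k)); apply: pe_catr; exact: T1.
Qed.

Lemma T4 n (s : seq 'I_n) : pres_eq (@rac_rel n) (Lw s) (tw (\sum_(k <- s) evec k)).
Proof. by have := T2 0 s; rewrite tw0 add0r. Qed.

Definition sA n (C : 'M['F_2]_n) (j : 'I_n) :=
  j :: filter (fun k : 'I_n => (j < k)%N && (C j k == 1)) (enum 'I_n).

Lemma alphaE n (C : 'M['F_2]_n) j : alpha C j = (rshift n j, true) :: Lw (sA C j).
Proof. by []. Qed.

Lemma sum_sA n (C : 'M['F_2]_n) j : \sum_(k <- sA C j) evec k = lam C (rshift n j).
Proof.
apply/matrixP => a k; rewrite (ord1 a) lam_rE big_cons mxE summxE evecE; congr (_ + _).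
rewrite big_filter big_enum_cond /= big_mkcond /=.
rewrite (bigD1 k) //= big1 ?addr0.
  rewrite evecE eqxx; case: (j < k)%N => //=.
  by case: (F2cases (C j k)) => ->.
by move=> i /negbTE ik; case: ifP => // _; rewrite evecE eq_sym ik.
Qed.

Lemma Lw_tw n (s : seq 'I_n) d :
  pres_eq (@rac_rel n) (Lw s ++ tw d) (tw (\sum_(k <- s) evec k + d)).
Proof. by rewrite /tw -Lw_cat -/(fl d); have := T4 (s ++ fl d); rewrite big_cat /= sum_filter. Qed.

Lemma tw_comm n (c : 'rV['F_2]_n) j : c 0 j = 0 ->
  pres_eq (@rac_rel n) (tw c ++ [:: (rshift n j, true)]) ((rshift n j, true) :: tw c).
Proof.
move=> cj; apply: comm_list => y /mapP [k]; rewrite -/(fl c) mem_fl => ck ->.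
apply: pres_sym; apply: comm_lr; apply/eqP => kj; move: ck; by rewrite kj cj.
Qed.

Lemma subst1 I J (f : I -> word J) j b :
  subst_word f [:: (j, b)] = if b then f j else winv (f j).
Proof. by rewrite /subst_word /= cats0. Qed.

Lemma subst_cat I J (f : I -> word J) u v :
  subst_word f (u ++ v) = subst_word f u ++ subst_word f v.
Proof. by rewrite /subst_word map_cat flatten_cat. Qed.

Lemma norm_Lw n (s : seq 'I_n) : norm (Lw s) = Lw s.
Proof. by rewrite /norm /Lw -map_comp. Qed.

Lemma T3 n (C : 'M['F_2]_n) c j :
  pres_eq (@rac_rel n) (tw c ++ [:: (rshift n j, true)])
    (subst_word (alpha C) [:: (j, c 0 j == 0)] ++ tw (c + lam C (rshift n j))).
Proof.
rewrite subst1 alphaE.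
set v := lam C (rshift n j).
have vj : v 0 j = 1 by rewrite /v lam_rjj.
case: (F2cases (c 0 j)) => cj; rewrite cj.
- rewrite eqxx; apply: pres_trans (tw_comm cj) _.
  have H : pres_eq (@rac_rel n) (Lw (sA C j) ++ tw (c + v)) (tw c).
    apply: pres_trans (Lw_tw _ _) _.
    rewrite sum_sA -/v addrCA dblv addr0; exact: pres_refl.
  exact: (pe_catl [:: (rshift n j, true)] (pres_sym H)).
- have -> : (1 == 0 :> 'F_2) = false by [].
  apply: pres_sym.
  apply: pres_trans (_ : pres_eq _ (norm (winv ((rshift n j, true) :: Lw (sA C j))) ++ tw (c + v)) _).
    apply: pe_catr; exact: pe_norm.
  rewrite norm_winv.
  have -> : norm ((rshift n j, true) :: Lw (sA C j)) = (rshift n j, true) :: Lw (sA C j).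
    by rewrite -{2}(norm_Lw (sA C j)).
  rewrite rev_cons -cats1 /Lw -map_rev -/(Lw _) -catA.
  have dj : (c + v) 0 j = 0 by rewrite mxE cj vj; apply/val_inj.
  apply: pres_trans (_ : pres_eq _ (Lw (rev (sA C j)) ++ (tw (c + v) ++ [:: (rshift n j, true)])) _).
    apply: pe_catl; apply: pres_sym; exact: tw_comm.
  rewrite catA; apply: pe_catr.
  apply: pres_trans (Lw_tw _ _) _.
  rewrite big_rev sum_sA -/v addrCA dblv addr0; exact: pres_refl.
Qed.

Lemma T5 n (C : 'M['F_2]_n) c l :
  pres_eq (@rac_rel n) (tw c ++ [:: l])
    (subst_word (alpha C) (tau1 c l) ++ tw (c + dl C l)).
Proof.
case: l => i b; rewrite dlE /=.
apply: pres_trans (pe_catl _ (pe_letter i b)) _.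
rewrite -(splitK i); case: (split i) => k.
- have -> : unsplit (inl k) = lshift n k by [].
  by rewrite tau1_l lam_l; exact: T1.
- have -> : unsplit (inr k) = rshift n k by [].
  by rewrite tau1_r; exact: T3.
Qed.

Lemma T6 n (C : 'M['F_2]_n) w c :
  pres_eq (@rac_rel n) (tw c ++ w) (subst_word (alpha C) (tau C c w) ++ tw (c + phi C w)).
Proof.
elim: w c => [|l w IH] c.
  by rewrite cats0 phi_nil addr0; exact: pres_refl.
rewrite /= subst_cat phi_cons addrA -catA.
apply: pres_trans (_ : pres_eq _ ((subst_word (alpha C) (tau1 c l) ++ tw (c + dl C l)) ++ w) _).
  by rewrite -cat1s catA; apply: pe_catr; exact: T5.
rewrite -catA; apply: pe_catl; exact: IH.
Qed.

Definition rr n (a b : 'I_n) : word 'I_(n+n) :=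
  [:: (rshift n a, true); (rshift n b, true); (rshift n a, true); (rshift n b, true)].

Lemma tau_rr n (C : 'M['F_2]_n) c (a b : 'I_n) : (a < b)%N ->
  tau C c (rr a b) =
  [:: (a, c 0 a == 0); (b, c 0 b + C a b == 0); (a, c 0 a + 1 == 0); (b, c 0 b + 1 == 0)].
Proof.
move=> ab; rewrite /rr /= !tau1_r !dlE /= !mxE.
rewrite !lam_rjj (lam_rlt C ab) (lam_rgt C ab) /=.
by case: (F2cases (c 0 a)) => ->; case: (F2cases (c 0 b)) => ->; case: (F2cases (C a b)) => ->.
Qed.

Lemma pe_rotk I (R : word I -> Prop) r k : pres_eq R r [::] -> pres_eq R (rot k r) [::].
Proof. by move=> H; rewrite /rot; apply: pe_rot; rewrite cat_take_drop. Qed.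

Lemma bott_words n (C : 'M['F_2]_n) (a b : 'I_n) (x y : 'F_2) : (a < b)%N ->
  pres_eq (bott_rel C)
   [:: (a, x == 0); (b, y + C a b == 0); (a, x + 1 == 0); (b, y + 1 == 0)] [::].
Proof.
move=> ab.
have H : pres_eq (bott_rel C) (xpq C a b) [::] by apply: pe_rel; exists a, b.
have Hi := pe_inv H.
have K : forall k, pres_eq (bott_rel C) (rot k (xpq C a b)) [::] /\
                   pres_eq (bott_rel C) (rot k (winv (xpq C a b))) [::].
  by move=> k; split; apply: pe_rotk.
move: K; rewrite /xpq.
case: (F2cases (C a b)) => ->; case: (F2cases x) => ->; case: (F2cases y) => -> /= K.
all: first [ exact: (proj1 (K 0%N)) | exact: (proj1 (K 1%N)) | exact: (proj1 (K 2%N))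
           | exact: (proj1 (K 3%N)) | exact: (proj2 (K 0%N)) | exact: (proj2 (K 1%N))
           | exact: (proj2 (K 2%N)) | exact: (proj2 (K 3%N)) ].
Qed.

Lemma dbl2 n (x y : 'rV['F_2]_n) : x + (y + (x + y)) = 0.
Proof.
apply/matrixP => a b; rewrite !mxE.
by case: (F2cases (x a b)) => ->; case: (F2cases (y a b)) => ->; apply/val_inj.
Qed.

Lemma addE n (x y : 'rV['F_2]_n) k : (x + y) 0 k = x 0 k + y 0 k.
Proof. by rewrite mxE. Qed.

Lemma rel_phi0 n (C : 'M['F_2]_n) r : rac_rel r -> phi C r = 0.
Proof.
case=> [[i ->]|[i [j [_ [_ ->]]]]].
  rewrite !phi_cons phi_nil !dlE addr0 /=; exact: dblv.
rewrite !phi_cons phi_nil !dlE /= addr0.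
exact: dbl2.
Qed.

Lemma tau_rel n (C : 'M['F_2]_n) r c : rac_rel r -> pres_eq (bott_rel C) (tau C c r) [::].
Proof.
case=> [[i ->]|[i [j [ij [jn ->]]]]].
  rewrite /= -(splitK i); case: (split i) => k.
    have -> : unsplit (inl k) = lshift n k by [].
    by rewrite !tau1_l; exact: pres_refl.
  have -> : unsplit (inr k) = rshift n k by [].
  rewrite !tau1_r dlE mxE lam_rjj F2ne /=.
  exact: (pres_cancel _ [::] [::] k (c 0 k == 0)).
move: ij jn; rewrite -(splitK i) -(splitK j).
case: (split i) => a; case: (split j) => b.
- have -> : unsplit (inl a) = lshift n a by [].
  have -> : unsplit (inl b) = lshift n b by [].
  by move=> _ _ /=; rewrite !tau1_l; exact: pres_refl.
- have -> : unsplit (inl a) = lshift n a by [].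
  have -> : unsplit (inr b) = rshift n b by [].
  move=> _ /= ba.
  have ba' : (b == a) = false.
    by apply/negbTE; apply: contra ba => /eqP ->; rewrite addnC.
  rewrite !tau1_l !tau1_r !dlE /= !lam_l !mxE lam_rjj ba' /= !addr0 F2ne.
  exact: (pres_cancel _ [::] [::] b (c 0 b == 0)).
- have -> : unsplit (inr a) = rshift n a by [].
  have -> : unsplit (inl b) = lshift n b by [].
  move=> /= H; exfalso; move: H; rewrite ltnNge.
  by rewrite (leq_trans (ltnW (ltn_ord b))) ?leq_addr.
- have -> : unsplit (inr a) = rshift n a by [].
  have -> : unsplit (inr b) = rshift n b by [].
  move=> ab _; have ab' : (a < b)%N by move: ab; rewrite /= ltn_add2l.
  change (pres_eq (bott_rel C) (tau C c (rr a b)) [::]).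
  rewrite tau_rr //; exact: bott_words.
Qed.

Lemma D1 n (C : 'M['F_2]_n) w1 w2 : pres_eq (@rac_rel n) w1 w2 ->
  phi C w1 = phi C w2 /\ forall c, pres_eq (bott_rel C) (tau C c w1) (tau C c w2).
Proof.
elim=> {w1 w2} [w|u v _ [IH1 IH2]|u v w _ [IH1 IH2] _ [IH3 IH4]|u v x b|u v r Hr].
- by split=> // c; exact: pres_refl.
- by split=> // c; exact: pres_sym.
- by split; [rewrite IH1 | move=> c; exact: pres_trans (IH2 c) (IH4 c)].
- split.
    by rewrite !phi_cat !phi_cons dl_neg addNKr.
  move=> c; rewrite !tau_cat /= dl_neg addrK.
  set c' := c + phi C u.
  rewrite -(splitK x); case: (split x) => k.
    have -> : unsplit (inl k) = lshift n k by [].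
    by rewrite !tau1_l; exact: pres_refl.
  have -> : unsplit (inr k) = rshift n k by [].
  rewrite !tau1_r dlE /= (addE c') lam_rjj F2ne.
  exact: (pres_cancel _ _ _ k (c' 0 k == 0)).
- split.
    by rewrite !phi_cat (rel_phi0 C Hr) add0r.
  move=> c; rewrite !tau_cat (rel_phi0 C Hr) addr0.
  apply: pe_catl.
  exact: (pe_catr _ (tau_rel C (c + phi C u) Hr)).
Qed.

Lemma tau_cons n (C : 'M['F_2]_n) c l w : tau C c (l :: w) = tau1 c l ++ tau C (c + dl C l) w.
Proof. by []. Qed.
Lemma tau_Lw n (C : 'M['F_2]_n) c s : tau C c (Lw s) = [::].
Proof. exact: tau_lsh. Qed.

Lemma phi_alpha n (C : 'M['F_2]_n) j : phi C (alpha C j) = 0.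
Proof. by rewrite alphaE phi_cons phi_Lw sum_sA dlE dblv. Qed.

Lemma winv_Lw n (s : seq 'I_n) : winv (Lw s) = map (fun k => (lshift n k, false)) (rev s).
Proof. by rewrite /winv /Lw map_rev -map_comp. Qed.

Definition blk n (C : 'M['F_2]_n) (l : 'I_n * bool) : word 'I_(n+n) :=
  if l.2 then alpha C l.1 else winv (alpha C l.1).

Lemma blk_phi n (C : 'M['F_2]_n) l : phi C (blk C l) = 0.
Proof. by rewrite /blk; case: ifP => _; rewrite ?phi_winv phi_alpha ?oppr0. Qed.

Lemma blk_tau n (C : 'M['F_2]_n) l : tau C 0 (blk C l) = [:: l].
Proof.
case: l => j b; rewrite /blk /=; case: b.
  by rewrite alphaE tau_cons tau1_r tau_Lw mxE.
rewrite alphaE winv_cons tau_cat phi_winv phi_Lw sum_sA oppv add0r winv_Lw tau_lsh /=.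
by rewrite tau1_r lam_rjj.
Qed.

Lemma subst_cons I J (f : I -> word J) l u :
  subst_word f (l :: u) = (if l.2 then f l.1 else winv (f l.1)) ++ subst_word f u.
Proof. by []. Qed.

Lemma tau0_subst n (C : 'M['F_2]_n) u :
  phi C (subst_word (alpha C) u) = 0 /\ tau C 0 (subst_word (alpha C) u) = u.
Proof.
elim: u => [|l u [IH1 IH2]]; first by rewrite phi_nil.
rewrite subst_cons -/(blk C l) phi_cat tau_cat blk_phi IH1 addr0 blk_tau IH2.
by split.
Qed.

Lemma C1 n (C : 'M['F_2]_n) u v : pres_eq (bott_rel C) u v ->
  pres_eq (@rac_rel n) (subst_word (alpha C) u) (subst_word (alpha C) v).
Proof.
elim=> {u v} [u|u v _ IH|u v w _ IH1 _ IH2|u v x b|u v r Hr].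
- exact: pres_refl.
- exact: pres_sym.
- exact: pres_trans IH2.
- rewrite !subst_cat !subst_cons /=; apply: pe_catl.
  rewrite catA -{2}(cat0s (subst_word _ v)); apply: pe_catr.
  by case: b; [exact: pe_winvr | exact: pe_winvl].
- rewrite !subst_cat; apply: pe_catl; rewrite -{2}(cat0s (subst_word _ v)); apply: pe_catr.
  case: Hr => p [q [pq ->]].
  have Hrr : rac_rel (rr p q).
    right; exists (rshift n p), (rshift n q); split; first by rewrite /= ltn_add2l.
    split; last by [].
    rewrite /= neq_ltn; apply/orP; left.
    by rewrite -addnA ltn_add2l (leq_trans (ltn_ord q)) // leq_addl.
  have H := T6 C (rr p q) 0.
  rewrite tw0 (rel_phi0 C Hrr) addr0 tw0 cats0 tau_rr // !mxE !add0r in H.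
  have E : [:: (p, (0 : 'F_2) == 0); (q, C p q == 0); (p, (1 : 'F_2) == 0); (q, (1 : 'F_2) == 0)]
           = xpq C p q.
    by rewrite /xpq; case: (F2cases (C p q)) => ->.
  rewrite E in H.
  apply: pres_trans (pres_sym H) _; exact: pe_rel.
Qed.

Unset Implicit Arguments.

Theorem theorem2p1 (n : nat) (C : 'M['F_2]_n) :
  (0 < n)%N -> is_bott_matrix C ->
  (* the alpha_j lie in the kernel of W -> Z_2^n *)
  (forall u : word 'I_n, phi C (subst_word (alpha C) u) = 0) /\
  (* they generate the kernel *)
  (forall w : word 'I_(n + n), phi C w = 0 ->
     exists u : word 'I_n, pres_eq (@rac_rel n) (subst_word (alpha C) u) w) /\
  (* the x_{p,q} form a complete set of defining relations *)
  (forall u v : word 'I_n,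
     pres_eq (@rac_rel n) (subst_word (alpha C) u) (subst_word (alpha C) v)
     <-> pres_eq (bott_rel C) u v).
Proof.
move=> _ _; split; [|split].
- by move=> u; case: (tau0_subst C u).
- move=> w hw; exists (tau C 0 w).
  have := T6 C w 0; rewrite tw0 hw addr0 tw0 cats0 cat0s => H.
  exact: pres_sym H.
- move=> u v; split; last exact: C1.
  move=> /(D1 C) [_ /(_ 0)].
  by case: (tau0_subst C u) => _ ->; case: (tau0_subst C v) => _ ->.
Qed.
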